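(* Consider any tuples $(\lambda ,S_k^\lambda ,F_k^\lambda ,P_k^\lambda )_{k = 0}^{N - 1}$ such that $\lambda>0$ and $C(\{ S_k^\lambda \} _{k = 0}^{N - 1} ) = \gamma$, i.e. elements of \[ \Lambda : = \{ (\lambda ,S_k^\lambda ,F_k^\lambda ,P_k^\lambda )_{k = 0}^{N - 1} :\lambda > 0, C(\{ S_k^\lambda \} _{k = 0}^{N - 1} ) = \gamma \}. \] Then, the corresponding $\{(S_k^\lambda,F_k^\lambda)\}_{k=0}^{N-1}$ with $(\lambda ,S_k^\lambda ,F_k^\lambda ,P_k^\lambda )_{k = 0}^{N - 1} \in \Lambda$ is an optimal solution of the constrained LQG (covariance selection) problem.
   Context: Consider the stochastic LTI system $x(k+1)=Ax(k)+Bu(k)+w(k)$ with $x(k)\in\mathbb R^n$, $u(k)\in\mathbb R^m$, $x(0)\sim\mathcal N(z,V)$, $w(k)\sim\mathcal N(0,W)$ mutually independent, and linear feedback $u(k)=F_kx(k)$, $k\in\{0,\dots,N-1\}$. With $S_k=\mathbb E([x(k);u(k)][x(k);u(k)]^T)$, the constrained LQG (covariance selection) problem is: minimize $J_p(\{S_k\})=\mathrm{Tr}\big(Q_f([A\ B]S_{N-1}[A\ B]^T+W)\big)+\sum_{k=0}^{N-1}\mathrm{Tr}(\mathrm{diag}(Q_k,R_k)S_k)$ over $\{S_k,F_k\}$ subject to $S_k=\Phi(F_k,S_{k-1})$ ($k=1,\dots,N-1$), $S_0=[I_n;F_0](V+zz^T)[I_n;F_0]^T$, and $C(\{S_k\})\le\gamma$,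 where $C(\{S_k\})=\mathrm{Tr}\big(\tilde Q_f([A\ B]S_{N-1}[A\ B]^T+W)\big)+\sum_{k=0}^{N-1}\mathrm{Tr}(\mathrm{diag}(\tilde Q_k,\tilde R_k)S_k)$ and $\Phi(F,S)=[I_n;F]([A\ B]S[A\ B]^T+W)[I_n;F]^T$. Assumptions: $Q_f,\tilde Q_f,Q_k,\tilde Q_k\succeq0$, $R_k+\lambda\tilde R_k\succ0$ for all $k$, $\lambda>0$; $V\succ0$, $W\succ0$; strict feasibility of the inequality constraint; and $C(\{S_k^0\})>\gamma$ (the unconstrained LQG solution violates the constraint). For $\lambda\ge0$, $X_N^\lambda=Q_f+\lambda\tilde Q_f$, $X_k^\lambda=A^TX_{k+1}^\lambda A-A^TX_{k+1}^\lambda B(R_k+\lambda\tilde R_k+B^TX_{k+1}^\lambda B)^{-1}B^TX_{k+1}^\lambda A+Q_k+\lambda\tilde Q_k$, $F_k^\lambda=-(R_k+\lambda\tilde R_k+B^TX_{k+1}^\lambda B)^{-1}B^TX_{k+1}^\lambda A$, $S_0^\lambda=[I;F_0^\lambda](V+zz^T)[I;F_0^\lambda]^T$, $S_k^\lambda=\Phi(F_k^\lambda,S_{k-1}^\lambda)$, $P_k^\lambda=\begin{bmatrix}Q_k+\lambda\tilde Q_k+A^TX_{k+1}^\lambda A & A^TX_{k+1}^\lambda B\\ B^TX_{k+1}^\lambda A & R_k+\lambda\tilde R_k+B^TX_{k+1}^\lambda B\end{bmatrix}$. It was shown that $\Lambda$ is exactly the set of KKT points (with Lagrange multipliers $P_k$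 for the equality constraints and $\lambda$ for the inequality constraint) of this problem, and that if $C(\{S_k^\lambda\})=C(\{S_k^{\lambda+\varepsilon}\})$ then $J_p(\{S_k^\lambda\})=J_p(\{S_k^{\lambda+\varepsilon}\})$. *)

(* Defs.v *)
From mathcomp Require Import all_boot all_order all_algebra.
Set Implicit Arguments. Unset Strict Implicit. Unset Printing Implicit Defensive.
Import Order.TTheory GRing.Theory Num.Theory.
Local Open Scope ring_scope.

Definition psd (R : realFieldType) k (M : 'M[R]_k) : Prop :=
  M^T = M /\ forall x : 'cV[R]_k, 0 <= (x^T *m M *m x) 0 0.
Definition pd (R : realFieldType) k (M : 'M[R]_k) : Prop :=
  M^T = M /\ forall x : 'cV[R]_k, x != 0 -> 0 < (x^T *m M *m x) 0 0.

(* Problem data: x(k+1) = A x(k) + B u(k) + w(k), x(0) ~ N(z,V), w ~ N(0,W);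
   cost weights Qf, Q k, Rc k; constraint weights Qtf, Qt k, Rt k. *)
Record LQGdata (R : realFieldType) (n m : nat) := {
  A : 'M[R]_n; B : 'M[R]_(n, m);
  V : 'M[R]_n; W : 'M[R]_n; z : 'cV[R]_n;
  Qf : 'M[R]_n; Qtf : 'M[R]_n;
  Q : nat -> 'M[R]_n; Qt : nat -> 'M[R]_n;
  Rc : nat -> 'M[R]_m; Rt : nat -> 'M[R]_m }.

Section LQG.
Variables (R : realFieldType) (n m : nat) (N : nat) (P : LQGdata R n m).

Definition AB : 'M[R]_(n, n + m) := row_mx (A P) (B P).
Definition IF (F : 'M[R]_(m, n)) : 'M[R]_(n + m, n) := col_mx 1%:M F.

Definition Phi (F : 'M[R]_(m, n)) (S : 'M[R]_(n + m)) : 'M[R]_(n + m) :=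
  IF F *m (AB *m S *m AB^T + W P) *m (IF F)^T.

(* initial second moment [I;F0](V + z z^T)[I;F0]^T *)
Definition S0 (F : 'M[R]_(m, n)) : 'M[R]_(n + m) :=
  IF F *m (V P + z P *m (z P)^T) *m (IF F)^T.

Definition gcost (Xf : 'M[R]_n) (X : nat -> 'M[R]_n) (Y : nat -> 'M[R]_m)
    (S : nat -> 'M[R]_(n + m)) : R :=
  \tr (Xf *m (AB *m S N.-1 *m AB^T + W P)) +
  \sum_(k < N) \tr (block_mx (X k) 0 0 (Y k) *m S k).

Definition Jp (S : nat -> 'M[R]_(n + m)) : R := gcost (Qf P) (Q P) (Rc P) S.
Definition Ccost (S : nat -> 'M[R]_(n + m)) : R := gcost (Qtf P) (Qt P) (Rt P) S.

Definition feasible (gamma : R) (S : nat -> 'M[R]_(n + m)) (F : nat -> 'M[R]_(m, n)) : Prop :=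
  S 0%N = S0 (F 0%N) /\
  (forall k : nat, (1 <= k < N)%N -> S k = Phi (F k) (S k.-1)) /\
  Ccost S <= gamma.

Definition strictly_feasible (gamma : R) (S : nat -> 'M[R]_(n + m)) (F : nat -> 'M[R]_(m, n)) : Prop :=
  S 0%N = S0 (F 0%N) /\
  (forall k : nat, (1 <= k < N)%N -> S k = Phi (F k) (S k.-1)) /\
  Ccost S < gamma.

Definition optimal (gamma : R) (S : nat -> 'M[R]_(n + m)) (F : nat -> 'M[R]_(m, n)) : Prop :=
  feasible gamma S F /\
  forall S' F', feasible gamma S' F' -> Jp S <= Jp S'.

Definition ricc_step (lam : R) (k : nat) (X : 'M[R]_n) : 'M[R]_n :=
  (A P)^T *m X *m A P
  - (A P)^T *m X *m B P
      *m invmx (Rc P k + lam *: Rt P k + (B P)^T *m X *m B P)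
      *m (B P)^T *m X *m A P
  + Q P k + lam *: Qt P k.

(* Xback lam j = X^lam_{N-j} *)
Fixpoint Xback (lam : R) (j : nat) : 'M[R]_n :=
  match j with
  | 0 => Qf P + lam *: Qtf P
  | j'.+1 => ricc_step lam (N - j'.+1) (Xback lam j')
  end.

Definition Xlam (lam : R) (k : nat) : 'M[R]_n := Xback lam (N - k).

Definition Flam (lam : R) (k : nat) : 'M[R]_(m, n) :=
  - (invmx (Rc P k + lam *: Rt P k + (B P)^T *m Xlam lam k.+1 *m B P)
       *m (B P)^T *m Xlam lam k.+1 *m A P).

Fixpoint Slam (lam : R) (k : nat) : 'M[R]_(n + m) :=
  match k with
  | 0 => S0 (Flam lam 0)
  | k'.+1 => Phi (Flam lam k'.+1) (Slam lam k')
  end.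

(* multiplier matrices P^lam_k (not needed in the statement's conclusion) *)
Definition Plam (lam : R) (k : nat) : 'M[R]_(n + m) :=
  block_mx (Q P k + lam *: Qt P k + (A P)^T *m Xlam lam k.+1 *m A P)
           ((A P)^T *m Xlam lam k.+1 *m B P)
           ((B P)^T *m Xlam lam k.+1 *m A P)
           (Rc P k + lam *: Rt P k + (B P)^T *m Xlam lam k.+1 *m B P).

End LQG.

(* Main.v *)
Require Import Defs.
From mathcomp Require Import all_boot all_order all_algebra.
From mathcomp Require Import ring lra zify.
Import Order.TTheory GRing.Theory Num.Theory.
Set Implicit Arguments. Unset Strict Implicit.
Local Open Scope ring_scope.

Section Generic.
Variable R : realFieldType.

Definition bil k (M : 'M[R]_k) (x y : 'cV[R]_k) : R := (x^T *m M *m y) 0 0.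

Lemma bilDr k (M : 'M[R]_k) x y y' : bil M x (y + y') = bil M x y + bil M x y'.
Proof. by rewrite /bil mulmxDr mxE. Qed.
Lemma bilZr k (M : 'M[R]_k) x a y : bil M x (a *: y) = a * bil M x y.
Proof. by rewrite /bil -scalemxAr mxE. Qed.
Lemma bilDl k (M : 'M[R]_k) x x' y : bil M (x + x') y = bil M x y + bil M x' y.
Proof. by rewrite /bil linearD /= !mulmxDl mxE. Qed.
Lemma bilZl k (M : 'M[R]_k) x a y : bil M (a *: x) y = a * bil M x y.
Proof. by rewrite /bil linearZ /= -!scalemxAl mxE. Qed.
Lemma bil_sym k (M : 'M[R]_k) x y : M^T = M -> bil M x y = bil M y x.
Proof.
move=> hM; rewrite /bil.
have -> : (x^T *m M *m y) 0 0 = (x^T *m M *m y)^T 0 0 by rewrite [RHS]mxE.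
by rewrite !trmx_mul trmxK hM mulmxA.
Qed.
Lemma bil_delta k (M : 'M[R]_k) i l : bil M (delta_mx i 0) (delta_mx l 0) = M i l.
Proof. by rewrite /bil trmx_delta -rowE -colE !mxE. Qed.
Lemma bil_deltal k (M : 'M[R]_k) i y : bil M (delta_mx i 0) y = (M *m y) i 0.
Proof. by rewrite /bil trmx_delta -mulmxA -rowE !mxE. Qed.

Lemma trmx_sym_entry k (M : 'M[R]_k) i l : M^T = M -> M l i = M i l.
Proof. by move=> hM; rewrite -{1}hM mxE. Qed.

Lemma psd_bil k (M : 'M[R]_k) x : psd M -> 0 <= bil M x x.
Proof. by case=> _ h; apply: h. Qed.

Lemma entryB p q (A B : 'M[R]_(p,q)) i j : (A - B) i j = A i j - B i j.
Proof. by rewrite !mxE. Qed.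
Lemma entryZ p q (A : 'M[R]_(p,q)) a i j : (a *: A) i j = a * A i j.
Proof. by rewrite !mxE. Qed.

Lemma tr11 (A : 'M[R]_1) : \tr A = A 0 0.
Proof. by rewrite /mxtrace big_ord1. Qed.

Lemma outerE k (c : 'cV[R]_k) i l : (c *m c^T) i l = c i 0 * c l 0.
Proof. by rewrite !mxE big_ord1 mxE. Qed.

Lemma bil_outer k (c x : 'cV[R]_k) : bil (c *m c^T) x x = (bil 1%:M c x) ^+ 2.
Proof.
rewrite /bil mulmx1 mulmxA -mulmxA [LHS]mxE big_ord1 expr2.
have -> : x^T *m c = (c^T *m x)^T by rewrite trmx_mul trmxK.
by rewrite [(_^T) 0 0]mxE.
Qed.
Lemma psd_tr k (K M : 'M[R]_k) : psd K -> psd M -> 0 <= \tr (K *m M).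
Proof.
move=> hK.
suff H : forall d (M : 'M[R]_k), psd M ->
    (forall i l : 'I_k, (i < k - d)%N -> M i l = 0) -> 0 <= \tr (K *m M).
  by move=> hM; apply: (H k) => // i l; rewrite subnn.
elim=> [|d IH] {}M hM hZ.
  have -> : M = 0 by apply/matrixP => i l; rewrite mxE hZ // subn0.
  by rewrite mulmx0 linear0.
have [hd|hd] := leqP k d.
  by apply: IH => // i l hi; exfalso; move: hi; lia.
have hj : (k - d.+1 < k)%N by lia.
set j := Ordinal hj.
have hZ1 : forall i : 'I_k, (i < k - d.+1)%N -> forall l, M l i = 0.
  by move=> i hi l; rewrite trmx_sym_entry ?hZ //; case: hM.
case: hM => hMs hMq.
have ha : 0 <= M j j by rewrite -bil_delta; apply: hMq.
have [a0|apos] := eqVneq (M j j) 0.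
  have hc : forall l, M j l = 0.
    move=> l; set b := M j l; set c := M l l.
    have key : forall t : R, 0 <= t * t * M j j + 2 * t * b + c.
      move=> t; have := hMq (t *: delta_mx j 0 + delta_mx l 0).
      rewrite -/(bil M _ _) !(bilDl, bilDr, bilZl, bilZr) !bil_delta.
      rewrite /b /c (trmx_sym_entry j l hMs); lra.
    apply/eqP/negPn/negP => bn0.
    have := key (- (c + 1) / (2 * b)); rewrite a0.
    have -> : 2 * (- (c + 1) / (2 * b)) * b = - (c + 1) by field; rewrite bn0.
    lra.
  apply: IH; first by [].
  move=> i l hi; have [hij|hij] := ltnP i (k - d.+1).
    by apply: hZ.
  have -> : i = j by apply: val_inj => /=; move: hi hij; rewrite subnS; lia.
  by rewrite hc.
have {}apos : 0 < M j j by rewrite lt_def apos.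
set a := M j j.
set c := col j M.
set M' := M - a^-1 *: (c *m c^T).
have hcE : forall i, c i 0 = M i j by move=> i; rewrite mxE.
have trE : \tr (K *m M) = \tr (K *m M') + a^-1 * bil K c c.
  rewrite /M' mulmxDr mulmxN -scalemxAr linearD linearN linearZ /=.
  have -> : \tr (K *m (c *m c^T)) = bil K c c by rewrite mulmxA mxtrace_mulC mulmxA tr11.
  ring.
rewrite trE; apply: addr_ge0; last first.
  by apply: mulr_ge0; [rewrite invr_ge0 ltW | apply: psd_bil].
apply: IH.
  split.
    by rewrite /M' linearB linearZ /= trmx_mul trmxK hMs.
  move=> x.
  have e1 : bil M' x x = bil M x x - a^-1 * (bil 1%:M c x) ^+ 2.
    by rewrite /M' /bil mulmxBr mulmxBl entryB -scalemxAr -scalemxAl entryZ -/(bil M x x) -/(bil (c *m c^T) x x) bil_outer.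
  have e2 : bil 1%:M c x = bil M (delta_mx j 0) x.
    by rewrite bil_deltal /bil mulmx1 /c colE trmx_mul hMs trmx_delta -rowE -row_mul mxE.
  rewrite -/(bil M' x x) e1 e2.
  set s := bil M (delta_mx j 0) x.
  set t := s / a.
  have := hMq (x + (- t) *: delta_mx j 0).
  rewrite -/(bil M _ _) !(bilDl, bilDr, bilZl, bilZr) bil_delta (bil_sym x (delta_mx j 0) hMs) -/s -/a.
  move=> h.
  have -> : bil M x x - a^-1 * s ^+ 2 = bil M x x + - t * s + (- t * s + - t * (- t * a)).
    by rewrite /t; field; rewrite lt0r_neq0.
  exact: h.
move=> i l hi.
rewrite /M' !mxE big_ord1 !mxE.
have [hij|hij] := ltnP i (k - d.+1).
  by rewrite (hZ i l hij) (hZ i j hij) mul0r mulr0 subr0.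
have -> : i = j by apply: val_inj => /=; move: hi hij; rewrite subnS; lia.
rewrite -/a (trmx_sym_entry l j hMs); field; rewrite lt0r_neq0 //.
Qed.


Lemma psd_cong p q (T : 'M[R]_(p, q)) (M : 'M[R]_q) : psd M -> psd (T *m M *m T^T).
Proof.
case=> hs hq; split.
  by rewrite !trmx_mul trmxK hs mulmxA.
move=> x; have := hq (T^T *m x).
by rewrite trmx_mul trmxK !mulmxA.
Qed.

Lemma psd_add k (M1 M2 : 'M[R]_k) : psd M1 -> psd M2 -> psd (M1 + M2).
Proof.
case=> h1 q1 [h2 q2]; split; first by rewrite linearD /= h1 h2.
move=> x; rewrite mulmxDr mulmxDl mxE; exact: addr_ge0.
Qed.

Lemma psd_scale k (M : 'M[R]_k) a : 0 <= a -> psd M -> psd (a *: M).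
Proof.
move=> ha [h q]; split; first by rewrite linearZ /= h.
move=> x; rewrite -scalemxAr -scalemxAl entryZ; exact: mulr_ge0.
Qed.

Lemma pd_psd k (M : 'M[R]_k) : pd M -> psd M.
Proof.
case=> h q; split=> // x; have [->|xn0] := eqVneq x 0.
  by rewrite mulmx0 mxE.
exact: ltW (q x xn0).
Qed.

Lemma pd_add k (M1 M2 : 'M[R]_k) : pd M1 -> psd M2 -> pd (M1 + M2).
Proof.
case=> h1 q1 [h2 q2]; split; first by rewrite linearD /= h1 h2.
move=> x xn0; rewrite mulmxDr mulmxDl mxE; exact: ltr_wpDr (q2 x) (q1 x xn0).
Qed.

Lemma psd_outer k (c : 'cV[R]_k) : psd (c *m c^T).
Proof.
split; first by rewrite trmx_mul trmxK.
move=> x; rewrite -/(bil _ x x) bil_outer; exact: sqr_ge0.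
Qed.

Lemma pd_unit k (M : 'M[R]_k) : pd M -> M \in unitmx.
Proof.
case=> hs hq; rewrite unitmxE unitfE; apply/negP => /det0P [v vn0 hv].
have := hq v^T; rewrite trmx_eq0 trmxK hv mul0mx mxE => /(_ vn0).
by rewrite ltxx.
Qed.

Lemma psd_block p q (M1 : 'M[R]_p) (M2 : 'M[R]_q) : psd M1 -> psd M2 -> psd (block_mx M1 0 0 M2).
Proof.
move=> h1 h2.
have -> : block_mx M1 0 0 M2 = (col_mx 1%:M 0) *m M1 *m (col_mx 1%:M 0)^T
   + (col_mx 0 1%:M) *m M2 *m (col_mx 0 1%:M)^T.
  rewrite !tr_col_mx !trmx1 !trmx0 !mul_col_mx !mul_mx_row.
  by rewrite !(mul1mx, mul0mx, mulmx1, mulmx0) /block_mx add_col_mx !add_row_mx !(addr0, add0r).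
by apply: psd_add; apply: psd_cong.
Qed.

End Generic.

Lemma zmod_id (V : zmodType) (q a t u v w : V) :
  q + a + u + (v + w) = a - t + q + (w + v + (u + t)).
Proof.
rewrite (addrA (w + v) u t) [RHS]addrA [RHS]addrAC (addrAC a) subrK (addrC a q) -!addrA.
congr (_ + _); congr (_ + _).
by rewrite [LHS]addrC [v + w]addrC -addrA.
Qed.
Lemma key_gen (R : fieldType) n m (a Qq : 'M[R]_n) (G : 'M[R]_(m,n)) (H : 'M[R]_m) (F : 'M[R]_(m,n)) :
 H \in unitmx -> H^T = H ->
 (col_mx 1%:M F)^T *m block_mx (Qq + a) G^T G H *m col_mx 1%:M F
 = (a - G^T *m invmx H *m G + Qq) + (F + invmx H *m G)^T *m H *m (F + invmx H *m G).
Proof.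
move=> hU hH.
have hHi : (invmx H)^T = invmx H by rewrite trmx_inv hH.
rewrite tr_col_mx trmx1 mul_row_block mul_row_col !mul1mx mulmx1.
rewrite [(F + _)^T]linearD /= [(invmx H *m G)^T]trmx_mul hHi mulmxDl !mulmxDr !mulmxDl.
rewrite -!mulmxA.
rewrite !(mulmxA H (invmx H)) (mulmxV hU) !mul1mx !(mulmxA (invmx H) H) (mulVmx hU) !mul1mx.
rewrite !mulmxA.
exact: zmod_id.
Qed.

Lemma tele (R : zmodType) (f : nat -> R) N : \sum_(k < N) (f k - f k.+1) = f 0%N - f N.
Proof.
elim: N => [|N IH]; first by rewrite big_ord0 subrr.
by rewrite big_ord_recr /= IH addrA subrK.
Qed.

Section LQGproof.
Variables (R : realFieldType) (n m N : nat) (P : LQGdata R n m) (lam : R).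
Hypotheses (hN : (0 < N)%N) (hQf : psd (Qf P)) (hQtf : psd (Qtf P))
  (hQ : forall k, psd (Q P k)) (hQt : forall k, psd (Qt P k))
  (hRR : forall k (mu : R), 0 < mu -> pd (Rc P k + mu *: Rt P k))
  (hV : pd (V P)) (hW : pd (W P)) (hlam : 0 < lam).

Local Notation X := (Xlam N P lam).
Definition Hm k := Rc P k + lam *: Rt P k + (B P)^T *m X k.+1 *m B P.

Lemma XlamN : X N = Qf P + lam *: Qtf P.
Proof. by rewrite /Xlam subnn. Qed.

Lemma XlamS k : (k < N)%N -> X k = ricc_step P lam k (X k.+1).
Proof.
move=> hk; rewrite /Xlam.
have e1 : (N - k = (N - k.+1).+1)%N by lia.
rewrite e1 /=.
have e2 : (N - (N - k.+1).+1 = k)%N by lia.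
by rewrite e2.
Qed.

Lemma Plam_eq k : Plam N P lam k =
  block_mx (Q P k + lam *: Qt P k) 0 0 (Rc P k + lam *: Rt P k) + (AB P)^T *m X k.+1 *m AB P.
Proof.
by rewrite /Plam /AB tr_row_mx mul_col_mx mul_col_row add_block_mx !add0r.
Qed.

Lemma pd_H k : psd (X k.+1) -> pd (Hm k).
Proof.
move=> hX; apply: pd_add; first exact: hRR.
by rewrite -{2}(trmxK (B P)); apply: psd_cong.
Qed.

Lemma key k F : (k < N)%N -> psd (X k.+1) ->
  (IF F)^T *m Plam N P lam k *m IF F =
  X k + (F - Flam N P lam k)^T *m Hm k *m (F - Flam N P lam k).
Proof.
move=> hk hX.
have hH := pd_H hX.
have hU : Hm k \in unitmx by apply: pd_unit.
have hHs : (Hm k)^T = Hm k by case: hH.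
have hXs : (X k.+1)^T = X k.+1 by case: hX.
set G := (B P)^T *m X k.+1 *m A P.
have hGt : (A P)^T *m X k.+1 *m B P = G^T by rewrite /G !trmx_mul trmxK hXs mulmxA.
have eF : Flam N P lam k = - (invmx (Hm k) *m G) by rewrite /Flam /G !mulmxA.
rewrite eF opprK XlamS // /ricc_step /Plam.
rewrite hGt.
have -> : G^T *m invmx (Rc P k + lam *: Rt P k + (B P)^T *m X k.+1 *m B P) *m (B P)^T
   *m X k.+1 *m A P = G^T *m invmx (Hm k) *m G by rewrite /G /Hm !mulmxA.
rewrite -/(Hm k).
by rewrite /IF key_gen // addrA.
Qed.

Lemma psdX k : (k <= N)%N -> psd (X k).
Proof.
suff h : forall j, (j <= N)%N -> psd (X (N - j)).
  by move=> hk; have := h (N - k)%N; rewrite subKn //; apply; rewrite leq_subr.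
elim=> [|j IH] hj.
  by rewrite subn0 XlamN; apply: psd_add => //; apply: psd_scale => //; exact: ltW.
have hk : (N - j.+1 < N)%N by lia.
have e : (N - j.+1).+1 = (N - j)%N by lia.
have hX1 : psd (X (N - j.+1).+1) by rewrite e; apply: IH; lia.
have := key (Flam N P lam (N - j.+1)) hk hX1.
rewrite subrr trmx0 mul0mx mulmx0 addr0 => <-.
rewrite -[X in _ *m X](trmxK (IF _)); apply: psd_cong.
rewrite Plam_eq; apply: psd_add.
  apply: psd_block; first by apply: psd_add => //; apply: psd_scale => //; exact: ltW.
  exact: pd_psd (hRR _ hlam).
by rewrite -{2}(trmxK (AB P)); apply: psd_cong.
Qed.

Definition sig (S : nat -> 'M[R]_(n + m)) k : 'M[R]_n :=
  match k with 0 => V P + z P *m (z P)^T | k'.+1 => AB P *m S k' *m (AB P)^T + W P end.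

Section Traj.
Variables (S : nat -> 'M[R]_(n + m)) (F : nat -> 'M[R]_(m, n)).
Hypotheses (h0 : S 0%N = S0 P (F 0%N))
  (hS : forall k : nat, (1 <= k < N)%N -> S k = Phi P (F k) (S k.-1)).

Lemma S_sig k : (k < N)%N -> S k = IF (F k) *m sig S k *m (IF (F k))^T.
Proof. by case: k => [|k] hk; [rewrite h0 | rewrite hS]. Qed.

Lemma psd_sig k : (k < N)%N -> psd (sig S k).
Proof.
elim: k => [|k IH] hk.
  by apply: psd_add; [exact: pd_psd | exact: psd_outer].
apply: psd_add; last exact: pd_psd.
rewrite /= (S_sig (ltnW hk)); apply: psd_cong; apply: psd_cong; apply: IH; exact: ltnW.
Qed.

Definition Dm k := (F k - Flam N P lam k)^T *m Hm k *m (F k - Flam N P lam k).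

Lemma step k : (k < N)%N ->
  \tr (block_mx (Q P k + lam *: Qt P k) 0 0 (Rc P k + lam *: Rt P k) *m S k) =
  (\tr (X k *m sig S k) - \tr (X k.+1 *m sig S k.+1)) + \tr (X k.+1 *m W P) + \tr (Dm k *m sig S k).
Proof.
move=> hk.
have hX1 : psd (X k.+1) by apply: psdX.
have e1 : \tr (X k.+1 *m sig S k.+1) =
   \tr (((AB P)^T *m X k.+1 *m AB P) *m S k) + \tr (X k.+1 *m W P).
  by rewrite /= mulmxDr mxtraceD !mulmxA mxtrace_mulC !mulmxA.
have e2 : \tr (block_mx (Q P k + lam *: Qt P k) 0 0 (Rc P k + lam *: Rt P k) *m S k)
   + \tr (((AB P)^T *m X k.+1 *m AB P) *m S k) = \tr (X k *m sig S k) + \tr (Dm k *m sig S k).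
  rewrite -mxtraceD -mulmxDl -Plam_eq (S_sig hk) !mulmxA mxtrace_mulC !mulmxA.
  by rewrite (key (F k) hk hX1) mulmxDl mxtraceD /Dm.
rewrite e1; move: e2; set a := \tr (block_mx _ _ _ _ *m S k); lra.
Qed.

Lemma cost_id : gcost N P (Qf P + lam *: Qtf P) (fun k => Q P k + lam *: Qt P k)
    (fun k => Rc P k + lam *: Rt P k) S =
  \tr (X 0%N *m sig S 0%N) + \sum_(k < N) \tr (X k.+1 *m W P) + \sum_(k < N) \tr (Dm k *m sig S k).
Proof.
rewrite /gcost -XlamN.
have -> : AB P *m S N.-1 *m (AB P)^T + W P = sig S N by rewrite -[in RHS](prednK hN).
rewrite (eq_bigr (fun k : 'I_N => (\tr (X k *m sig S k) - \tr (X k.+1 *m sig S k.+1)) + \tr (X k.+1 *m W P) + \tr (Dm k *m sig S k))); last first.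
  by move=> k _; apply: step.
have ht : \sum_(k < N) (\tr (X k *m sig S k) - \tr (X k.+1 *m sig S k.+1)) =
  \tr (X 0%N *m sig S 0%N) - \tr (X N *m sig S N) := tele (fun k => \tr (X k *m sig S k)) N.
rewrite big_split big_split ht /=.
lra.
Qed.

End Traj.

Lemma gcost_comb S : gcost N P (Qf P + lam *: Qtf P) (fun k => Q P k + lam *: Qt P k)
    (fun k => Rc P k + lam *: Rt P k) S = Jp N P S + lam * Ccost N P S.
Proof.
rewrite /Jp /Ccost /gcost.
have hb : forall k, block_mx (Q P k + lam *: Qt P k) 0 0 (Rc P k + lam *: Rt P k) =
   block_mx (Q P k) 0 0 (Rc P k) + lam *: block_mx (Qt P k) 0 0 (Rt P k).
  by move=> k; rewrite scale_block_mx add_block_mx !scaler0 !addr0.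
under eq_bigr => k _ do rewrite hb mulmxDl -scalemxAl mxtraceD mxtraceZ.
rewrite big_split /= -mulr_sumr mulmxDl -scalemxAl mxtraceD mxtraceZ.
ring.
Qed.

End LQGproof.

Theorem proposition5 (R : realFieldType) (n m N : nat) (P : LQGdata R n m)
    (gamma lam : R) :
  (0 < N)%N ->
  psd (Qf P) -> psd (Qtf P) ->
  (forall k, psd (Q P k)) -> (forall k, psd (Qt P k)) ->
  (forall k (mu : R), 0 < mu -> pd (Rc P k + mu *: Rt P k)) ->
  pd (V P) -> pd (W P) ->
  (exists S F, strictly_feasible N P gamma S F) ->
  Ccost N P (Slam N P 0) > gamma ->
  0 < lam -> Ccost N P (Slam N P lam) = gamma ->
  optimal N P gamma (Slam N P lam) (Flam N P lam).
Proof.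
move=> hN hQf hQtf hQ hQt hRR hV hW _ _ hlam hC.
have hSl0 : Slam N P lam 0 = S0 P (Flam N P lam 0) by [].
have hSlk : forall k, (0 < k < N)%N ->
    Slam N P lam k = Phi P (Flam N P lam k) (Slam N P lam k.-1) by case.
split; first by split=> //; split=> //; rewrite hC.
move=> S' F' [h0 [hS hC']].
have e1 := cost_id hN hQf hQtf hQ hQt hRR hlam hSl0 hSlk.
have e2 := cost_id hN hQf hQtf hQ hQt hRR hlam h0 hS.
rewrite !gcost_comb in e1 e2.
have z1 : \sum_(k < N) \tr (Dm N P lam (Flam N P lam) k *m sig P (Slam N P lam) k) = 0.
  by apply: big1 => k _; rewrite /Dm subrr trmx0 !mul0mx linear0.
have z2 : 0 <= \sum_(k < N) \tr (Dm N P lam F' k *m sig P S' k).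
  apply: sumr_ge0 => k _; apply: psd_tr.
    rewrite /Dm -[X in _ *m X](trmxK (F' k - Flam N P lam k)); apply: psd_cong.
    apply: pd_psd; apply: pd_H => //; apply: psdX => //.
  exact: (psd_sig hV hW h0 hS (ltn_ord k)).
have e0 : sig P S' 0 = sig P (Slam N P lam) 0 by [].
rewrite e0 in e2.
have hl : lam * Ccost N P S' <= lam * gamma by rewrite ler_pM2l.
rewrite z1 hC in e1.
lra.
Qed.
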